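(* Let $\beta>0$. For every $x\in\mathbb N$ and $h\in(0,\beta/2)$, $$\kappa^x(h):=\widetilde{\mathbf P}_h\big(X_i>-x\ \ \forall i\in\mathbb N\big)=1-e^{-2hx}\,\frac{1-e^{h-\beta/2}}{1-e^{-h-\beta/2}}.$$ Moreover, for every $c>0$ and every $[h_1,h_2]\subset(0,\beta/2)$, $$\lim_{k\to\infty}\ \sup_{0\le x\le c\log k,\ h\in[h_1,h_2]}\big|\widetilde{\mathbf P}_h(X_i>-x,\ 1\le i\le k)-\kappa^x(h)\big|=0.$$
   Context: $c_\beta=\frac{1+e^{-\beta/2}}{1-e^{-\beta/2}}$, $\mathbf P_\beta(k)=e^{-\beta|k|/2}/c_\beta$ on $\mathbb Z$, $\mathcal L(h)=\log\sum_ke^{hk}\mathbf P_\beta(k)$ for $|h|<\beta/2$. For $|h|<\beta/2$, $\widetilde{\mathbf P}_h$ is the law under which $X=(X_i)_{i\ge0}$ is a random walk with $X_0=0$ and i.i.d. increments of law $\widetilde{\mathbf P}_h(k)=\mathbf P_\beta(k)e^{hk-\mathcal L(h)}$, $k\in\mathbb Z$. *)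

(* Defs.v *)
From Stdlib Require Import Reals ZArith.
From Coquelicot Require Import Coquelicot.
Open Scope R_scope.

Definition sumZ (f : Z -> R) : R :=
  f 0%Z + Series (fun n : nat => f (Z.of_nat (S n)) + f (- Z.of_nat (S n))%Z).

Definition c_beta (beta : R) : R :=
  (1 + exp (- beta / 2)) / (1 - exp (- beta / 2)).

Definition P_beta (beta : R) (k : Z) : R :=
  exp (- beta * Rabs (IZR k) / 2) / c_beta beta.

Definition Lcal (beta h : R) : R :=
  ln (sumZ (fun k => exp (h * IZR k) * P_beta beta k)).

Definition Ptilde (beta h : R) (k : Z) : R :=
  P_beta beta k * exp (h * IZR k - Lcal beta h).

(* surv beta h k x = ~P_h( X_i > -x for all 1 <= i <= k ), where X is the
   random walk with X_0 = 0 and i.i.d. increments of law Ptilde beta h.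
   Computed as the iterated sum over increment paths (first-step
   decomposition): the walk after its first step j is again a walk, and the
   remaining constraint is X'_i > -(x + j). *)
Fixpoint surv (beta h : R) (k : nat) (x : Z) : R :=
  match k with
  | O => 1
  | S k' => sumZ (fun j => Ptilde beta h j *
                          (if Z.ltb (- x) j then surv beta h k' (x + j)%Z else 0))
  end.

(* kappa^x(h) = ~P_h( X_i > -x for all i >= 1 ), the limit (continuity of the
   probability measure from above) of the finite-horizon probabilities. *)
Definition kappa (beta h : R) (x : nat) : R :=
  real (Lim_seq (fun k => surv beta h k (Z.of_nat x))).

(* Main.v *)
Require Import Defs.
From Stdlib Require Import Reals ZArith Lra Lia.
From Coquelicot Require Import Coquelicot.
Open Scope R_scope.

Definition pairZ (f : Z -> R) (n : nat) : R :=
  f (Z.of_nat (S n)) + f (- Z.of_nat (S n))%Z.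

Lemma sumZ_is (f : Z -> R) l : is_series (pairZ f) l -> sumZ f = f 0%Z + l.
Proof. intro H. unfold sumZ. change (f 0%Z + Series (pairZ f) = f 0%Z + l). rewrite (is_series_unique _ l H). reflexivity. Qed.

Lemma is_series_eq (a : nat -> R) l l' : is_series a l -> l = l' -> is_series a l'.
Proof. intros H ->; exact H. Qed.

Lemma tele_sum (W : nat -> R) n : sum_n (fun k => W k - W (S k)) n = W 0%nat - W (S n).
Proof.
  induction n as [|n IH].
  - rewrite sum_O. reflexivity.
  - rewrite sum_Sn, IH. simpl. unfold plus; simpl. ring.
Qed.

Lemma tele (W : nat -> R) : is_lim_seq W 0 -> is_series (fun n => W n - W (S n)) (W 0%nat).
Proof.
  intro H.
  assert (H1 : is_lim_seq (fun n => W 0%nat - W (S n)) (W 0%nat - 0)).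
  { apply is_lim_seq_minus'. apply is_lim_seq_const. exact (proj1 (is_lim_seq_incr_1 W 0) H). }
  replace (W 0%nat - 0) with (W 0%nat) in H1 by ring.
  apply (is_lim_seq_ext _ _ _ (fun n => eq_sym (tele_sum W n))) in H1.
  exact H1.
Qed.

Lemma sumZ_le (f g : Z -> R) : (forall j, f j <= g j) -> ex_series (pairZ f) -> ex_series (pairZ g) ->
  sumZ f <= sumZ g.
Proof.
  intros H Ef Eg. unfold sumZ.
  apply Rplus_le_compat; [apply H|].
  change (Series (pairZ f) <= Series (pairZ g)).
  assert (E : ex_series (fun n => pairZ g n - pairZ f n)).
  { exists (Series (pairZ g) - Series (pairZ f)).
    apply (is_series_minus (pairZ g) (pairZ f)); apply Series_correct; assumption. }
  assert (Series (fun n => pairZ g n - pairZ f n) >= 0).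
  { apply Rle_ge.
    assert (Z0 : Series (fun _ : nat => 0) = 0).
    { rewrite (Series_ext _ (fun n => 0 * pairZ f n)) by (intro; ring). rewrite Series_scal_l; ring. }
    rewrite <- Z0.
    apply Series_le; [|exact E]. intro n; unfold pairZ; split; [lra|].
    pose proof (H (Z.of_nat (S n))); pose proof (H (- Z.of_nat (S n))%Z); lra. }
  rewrite Series_minus in H0 by assumption. lra.
Qed.

Lemma ex_dom (f g : Z -> R) : (forall j, Rabs (f j) <= g j) -> ex_series (pairZ g) -> ex_series (pairZ f).
Proof.
  intros H E. apply (@ex_series_le R_AbsRing R_CompleteNormedModule _ (pairZ g)); [|exact E].
  intro n. change (norm (pairZ f n)) with (Rabs (pairZ f n)). unfold pairZ.
  eapply Rle_trans; [apply Rabs_triang|]. apply Rplus_le_compat; apply H.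
Qed.

Lemma sumZ_plus (f g : Z -> R) lf lg : is_series (pairZ f) lf -> is_series (pairZ g) lg ->
  is_series (pairZ (fun j => f j + g j)) (lf + lg).
Proof.
  intros Hf Hg. pose proof (is_series_plus _ _ _ _ Hf Hg) as H.
  eapply is_series_ext; [|exact H]. intro n; unfold pairZ; simpl; unfold plus; simpl; ring.
Qed.

Lemma sumZ_scal (f : Z -> R) c l : is_series (pairZ f) l ->
  is_series (pairZ (fun j => c * f j)) (c * l).
Proof.
  intros Hf. pose proof (is_series_scal_l c _ _ Hf) as H.
  eapply is_series_ext; [|exact H]. intro n; unfold pairZ; simpl; unfold scal; simpl; unfold mult; simpl; ring.
Qed.

Lemma exp_mul_INR c n : exp (c * INR n) = exp c ^ n.
Proof.
  induction n as [|n IH].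
  - simpl. rewrite Rmult_0_r, exp_0. reflexivity.
  - rewrite S_INR, Rmult_plus_distr_l, exp_plus, IH, Rmult_1_r. simpl. ring.
Qed.

Lemma geomS r : 0 <= r < 1 -> is_series (fun n => r ^ (S n)) (r / (1 - r)).
Proof.
  intro Hr. assert (Rabs r < 1) by (rewrite Rabs_pos_eq; lra).
  pose proof (is_series_scal_l r _ _ (is_series_geom r H)) as H1.
  eapply is_series_ext; [|exact H1]. intro n. reflexivity.
Qed.

Lemma exp_le_mono x y : x <= y -> exp x <= exp y.
Proof. intro H. destruct (Rle_lt_or_eq_dec _ _ H) as [H1|H1]. left; apply exp_increasing; auto. rewrite H1; lra. Qed.

Lemma exp_lt1 x : x < 0 -> exp x < 1.
Proof. intro. rewrite <- exp_0. apply exp_increasing; auto. Qed.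

Lemma lim_geom_shift r c k : 0 <= r < 1 -> is_lim_seq (fun n => c * r ^ (n + k)) 0.
Proof.
  intro Hr. assert (Rabs r < 1) by (rewrite Rabs_pos_eq; lra).
  pose proof (is_lim_seq_scal_l _ (c * r ^ k) _ (is_lim_seq_geom r H)) as H1.
  simpl in H1. rewrite Rmult_0_r in H1.
  eapply is_lim_seq_ext; [|exact H1]. intro n. simpl. rewrite pow_add. ring.
Qed.

Definition pp beta h := exp (h - beta/2).
Definition qq beta h := exp (-h - beta/2).
Definition Zc beta h := 1 + pp beta h / (1 - pp beta h) + qq beta h / (1 - qq beta h).
Definition ez beta t (j : Z) := exp (-(beta/2) * Rabs (IZR j) + t * IZR j).

Lemma ez_pos beta t n : ez beta t (Z.of_nat n) = exp (t - beta/2) ^ n.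
Proof.
  unfold ez. rewrite <- INR_IZR_INZ, Rabs_pos_eq by apply pos_INR.
  rewrite <- exp_mul_INR. f_equal. ring.
Qed.

Lemma ez_neg beta t n : ez beta t (- Z.of_nat n)%Z = exp (- t - beta/2) ^ n.
Proof.
  unfold ez. rewrite opp_IZR, <- INR_IZR_INZ, Rabs_Ropp, Rabs_pos_eq by apply pos_INR.
  rewrite <- exp_mul_INR. f_equal. ring.
Qed.

Lemma E1 beta t : -beta/2 < t < beta/2 ->
  is_series (pairZ (ez beta t))
    (exp (t - beta/2) / (1 - exp (t - beta/2)) + exp (- t - beta/2) / (1 - exp (- t - beta/2))).
Proof.
  intro Ht.
  assert (H1 : 0 <= exp (t - beta/2) < 1) by (split; [left; apply exp_pos | apply exp_lt1; lra]).
  assert (H2 : 0 <= exp (- t - beta/2) < 1) by (split; [left; apply exp_pos | apply exp_lt1; lra]).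
  pose proof (is_series_plus _ _ _ _ (geomS _ H1) (geomS _ H2)) as H.
  eapply is_series_ext; [|exact H]. intro n. unfold pairZ. rewrite ez_pos, ez_neg.
  simpl. unfold plus; simpl. ring.
Qed.

Lemma c_beta_pos beta : 0 < beta -> 0 < c_beta beta.
Proof.
  intro Hb. unfold c_beta. assert (exp (-beta/2) < 1) by (apply exp_lt1; lra).
  pose proof (exp_pos (-beta/2)). apply Rdiv_lt_0_compat; lra.
Qed.

Lemma pq_facts beta h : 0 < beta -> 0 < h < beta/2 ->
  0 < qq beta h < pp beta h /\ pp beta h < 1 /\ pp beta h * qq beta h = exp (-beta/2) * exp (-beta/2).
Proof.
  intros Hb Hh. unfold pp, qq. split; [split; [apply exp_pos| apply exp_increasing; lra]|].
  split; [apply exp_lt1; lra|]. rewrite <- !exp_plus. f_equal. lra.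
Qed.

Lemma Zc_pos beta h : 0 < beta -> 0 < h < beta/2 -> 0 < Zc beta h.
Proof.
  intros Hb Hh. destruct (pq_facts beta h Hb Hh) as [[H1 H2] [H3 _]]. unfold Zc.
  assert (0 < pp beta h / (1 - pp beta h)) by (apply Rdiv_lt_0_compat; lra).
  assert (0 < qq beta h / (1 - qq beta h)) by (apply Rdiv_lt_0_compat; lra). lra.
Qed.

Lemma Lcal_eq beta h : 0 < beta -> 0 < h < beta/2 -> exp (Lcal beta h) = Zc beta h / c_beta beta.
Proof.
  intros Hb Hh. unfold Lcal.
  assert (HS : sumZ (fun k => exp (h * IZR k) * P_beta beta k) = Zc beta h / c_beta beta).
  { assert (E : is_series (pairZ (fun k => / c_beta beta * ez beta h k))
        (/ c_beta beta * (exp (h - beta/2) / (1 - exp (h - beta/2)) + exp (- h - beta/2) / (1 - exp (- h - beta/2))))).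
    { apply sumZ_scal. apply E1. lra. }
    unfold sumZ. rewrite (Series_ext _ (pairZ (fun k => / c_beta beta * ez beta h k))).
    2:{ intro n. unfold pairZ.
        assert (c_beta beta <> 0) by (apply Rgt_not_eq, c_beta_pos; auto).
        assert (K : forall k, exp (h * IZR k) * P_beta beta k = / c_beta beta * ez beta h k).
        { intro k. unfold P_beta, ez. rewrite exp_plus.
          replace (-beta * Rabs (IZR k) / 2) with (-(beta/2) * Rabs (IZR k)) by field.
          field. auto. }
        rewrite !K. reflexivity. }
    rewrite (is_series_unique _ _ E). unfold P_beta, Zc, pp, qq.
    simpl. rewrite Rabs_R0, Rmult_0_r.
    assert (c_beta beta <> 0) by (apply Rgt_not_eq, c_beta_pos; auto).
    replace (-beta * 0 / 2) with 0 by field. rewrite exp_0.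
    assert (1 - exp (h - beta / 2) <> 0) by (apply Rgt_not_eq; pose proof (exp_lt1 (h - beta/2)); lra).
    assert (1 - exp (- h - beta / 2) <> 0) by (apply Rgt_not_eq; pose proof (exp_lt1 (-h - beta/2)); lra).
    field. auto. }
  rewrite HS. apply exp_ln. apply Rdiv_lt_0_compat; [apply Zc_pos|apply c_beta_pos]; auto.
Qed.

Lemma w_eq beta h j : 0 < beta -> 0 < h < beta/2 -> Ptilde beta h j = ez beta h j / Zc beta h.
Proof.
  intros Hb Hh. unfold Ptilde, P_beta, ez.
  unfold Rminus. rewrite exp_plus, exp_Ropp, Lcal_eq by auto.
  assert (c_beta beta <> 0) by (apply Rgt_not_eq, c_beta_pos; auto).
  assert (Zc beta h <> 0) by (apply Rgt_not_eq, Zc_pos; auto).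
  rewrite exp_plus. replace (-beta * Rabs (IZR j) / 2) with (-(beta/2) * Rabs (IZR j)) by field.
  field. split; auto.
Qed.

Definition th h := exp (-2 * h).
Definition Cc beta h := (1 - pp beta h) / (1 - qq beta h).
Definition gz beta h (z : Z) := 1 - Cc beta h * exp (-2 * h * IZR z).
Definition rho beta h :=
  (1 + exp (-beta/2) / (1 - exp (-beta/2)) + exp (-beta/2) / (1 - exp (-beta/2))) / Zc beta h.

Definition Gf beta h (x : Z) (j : Z) :=
  Ptilde beta h j * (if (- x <? j)%Z then gz beta h (x + j) else 0).

Definition Wt beta h (M : nat) (n : nat) :=
  (pp beta h ^ (S n) / (1 - pp beta h)
   - Cc beta h * th h ^ M * qq beta h ^ (S n) / (1 - qq beta h)
   + (if (S n <=? M)%nat then (qq beta h ^ (S n) - th h ^ M * pp beta h ^ (S n)) / (1 - qq beta h) else 0))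
  / Zc beta h.

Lemma ltb_pos M n : (- Z.of_nat M <? Z.of_nat (S n))%Z = true.
Proof. apply Z.ltb_lt. lia. Qed.

Lemma ltb_neg M n : (- Z.of_nat M <? - Z.of_nat (S n))%Z = (S n <? M)%nat.
Proof.
  destruct (Nat.ltb_spec (S n) M); [apply Z.ltb_lt; lia | apply Z.ltb_ge; lia].
Qed.

Lemma pair_val beta h M n : 0 < beta -> 0 < h < beta/2 ->
  pairZ (Gf beta h (Z.of_nat M)) n =
  (pp beta h ^ (S n) - Cc beta h * th h ^ M * qq beta h ^ (S n)
   + (if (S n <? M)%nat then qq beta h ^ (S n) - Cc beta h * th h ^ M * pp beta h ^ (S n) else 0))
  / Zc beta h.
Proof.
  intros Hb Hh. unfold pairZ, Gf. rewrite ltb_pos, ltb_neg, !w_eq by auto.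
  rewrite ez_pos, ez_neg. fold (pp beta h) (qq beta h).
  assert (Hz : Zc beta h <> 0) by (apply Rgt_not_eq, Zc_pos; auto).
  assert (HX : th h * pp beta h = qq beta h).
  { unfold th, pp, qq. rewrite <- exp_plus. f_equal. lra. }
  assert (HY : qq beta h * exp (2 * h) = pp beta h).
  { unfold pp, qq. rewrite <- exp_plus. f_equal. lra. }
  unfold gz.
  rewrite plus_IZR, <- !INR_IZR_INZ, Rmult_plus_distr_l, exp_plus, !exp_mul_INR.
  fold (th h).
  replace (th h ^ M * th h ^ S n) with (th h ^ M * th h ^ S n) by reflexivity.
  assert (E1 : pp beta h ^ S n * (1 - Cc beta h * (th h ^ M * th h ^ S n))
             = pp beta h ^ S n - Cc beta h * th h ^ M * qq beta h ^ S n).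
  { rewrite <- HX, Rpow_mult_distr. ring. }
  destruct (S n <? M)%nat.
  - rewrite plus_IZR, opp_IZR, <- !INR_IZR_INZ.
    replace (-2 * h * (INR M + - INR (S n))) with (-2 * h * INR M + 2 * h * INR (S n)) by ring.
    rewrite exp_plus, !exp_mul_INR. fold (th h).
    assert (E2 : qq beta h ^ S n * (1 - Cc beta h * (th h ^ M * exp (2 * h) ^ S n))
             = qq beta h ^ S n - Cc beta h * th h ^ M * pp beta h ^ S n).
    { rewrite <- HY, Rpow_mult_distr. ring. }
    replace (pp beta h ^ S n / Zc beta h * (1 - Cc beta h * (th h ^ M * th h ^ S n)))
      with ((pp beta h ^ S n * (1 - Cc beta h * (th h ^ M * th h ^ S n))) / Zc beta h) by (field; auto).
    replace (qq beta h ^ S n / Zc beta h * (1 - Cc beta h * (th h ^ M * exp (2 * h) ^ S n)))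
      with ((qq beta h ^ S n * (1 - Cc beta h * (th h ^ M * exp (2 * h) ^ S n))) / Zc beta h) by (field; auto).
    rewrite E1, E2. field. auto.
  - replace (pp beta h ^ S n / Zc beta h * (1 - Cc beta h * (th h ^ M * th h ^ S n)))
      with ((pp beta h ^ S n * (1 - Cc beta h * (th h ^ M * th h ^ S n))) / Zc beta h) by (field; auto).
    rewrite E1. field. auto.
Qed.

Lemma pair_tele beta h M n : 0 < beta -> 0 < h < beta/2 ->
  pairZ (Gf beta h (Z.of_nat M)) n = Wt beta h M n - Wt beta h M (S n).
Proof.
  intros Hb Hh. rewrite pair_val by auto. unfold Wt.
  destruct (pq_facts beta h Hb Hh) as [[Hq Hqp] [Hp1 _]].
  assert (Hz : Zc beta h <> 0) by (apply Rgt_not_eq, Zc_pos; auto).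
  assert (H1 : 1 - pp beta h <> 0) by lra.
  assert (H2 : 1 - qq beta h <> 0) by lra.
  assert (HX : th h * pp beta h = qq beta h).
  { unfold th, pp, qq. rewrite <- exp_plus. f_equal. lra. }
  change (pp beta h ^ S (S n)) with (pp beta h * pp beta h ^ S n).
  change (qq beta h ^ S (S n)) with (qq beta h * qq beta h ^ S n).
  unfold Cc.
  destruct (Nat.ltb_spec (S n) M); destruct (Nat.leb_spec (S n) M); destruct (Nat.leb_spec (S (S n)) M);
    try lia.
  - field. auto.
  - assert (M = S n) by lia. subst M.
    assert (E : th h ^ S n * pp beta h ^ S n = qq beta h ^ S n) by (rewrite <- Rpow_mult_distr, HX; auto).
    replace ((qq beta h ^ S n - th h ^ S n * pp beta h ^ S n) / (1 - qq beta h)) with 0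
      by (rewrite E; field; auto).
    field. auto.
  - field. auto.
Qed.

Lemma Wt_lim beta h M : 0 < beta -> 0 < h < beta/2 -> is_lim_seq (Wt beta h M) 0.
Proof.
  intros Hb Hh.
  destruct (pq_facts beta h Hb Hh) as [[Hq Hqp] [Hp1 _]].
  apply (is_lim_seq_incr_n _ M).
  assert (L1 := lim_geom_shift (pp beta h) (1 / (1 - pp beta h) / Zc beta h) (S M) ltac:(lra)).
  assert (L2 := lim_geom_shift (qq beta h) (- (Cc beta h * th h ^ M) / (1 - qq beta h) / Zc beta h) (S M) ltac:(lra)).
  pose proof (is_lim_seq_plus' _ _ _ _ L1 L2) as L. rewrite Rplus_0_r in L.
  eapply is_lim_seq_ext; [|exact L]. intro n. unfold Wt.
  destruct (Nat.leb_spec (S (n + M)) M); [lia|].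
  replace (S (n + M)) with (n + S M)%nat by lia.
  assert (Hz : Zc beta h <> 0) by (apply Rgt_not_eq, Zc_pos; auto).
  field. repeat split; try lra; auto.
Qed.

Lemma E2 beta h M : 0 < beta -> 0 < h < beta/2 ->
  ex_series (pairZ (Gf beta h (Z.of_nat M))) /\
  sumZ (Gf beta h (Z.of_nat M)) = gz beta h (Z.of_nat M).
Proof.
  intros Hb Hh.
  assert (T : is_series (pairZ (Gf beta h (Z.of_nat M))) (Wt beta h M 0%nat)).
  { eapply is_series_ext; [|apply tele, Wt_lim; auto]. intro n. rewrite pair_tele; auto. }
  split; [eexists; exact T|].
  rewrite (sumZ_is _ _ T).
  destruct (pq_facts beta h Hb Hh) as [[Hq Hqp] [Hp1 _]].
  assert (Hz : Zc beta h <> 0) by (apply Rgt_not_eq, Zc_pos; auto).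
  assert (H1 : 1 - pp beta h <> 0) by lra.
  assert (H2 : 1 - qq beta h <> 0) by lra.
  unfold Gf, Wt, gz. rewrite w_eq by auto.
  assert (E0 : ez beta h 0%Z = 1) by (unfold ez; rewrite Rabs_R0; replace (-(beta/2)*0 + h*0) with 0 by ring; apply exp_0).
  rewrite E0, Z.add_0_r, <- INR_IZR_INZ, exp_mul_INR. fold (th h).
  simpl (_ ^ 1).
  unfold Zc, Cc.
  destruct M as [|M'].
  - simpl. field. repeat split; try nra.
  - replace (- Z.of_nat (S M') <? 0)%Z with true by (symmetry; apply Z.ltb_lt; lia).
    destruct (Nat.leb_spec 1 (S M')); [|lia].
    field. repeat split; try nra.
Qed.

Lemma Ptilde_nonneg beta h j : 0 < beta -> 0 < h < beta/2 -> 0 <= Ptilde beta h j.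
Proof.
  intros Hb Hh. rewrite w_eq by auto. left. apply Rdiv_lt_0_compat; [apply exp_pos|apply Zc_pos; auto].
Qed.

Lemma E3 beta h z : 0 < beta -> 0 < h < beta/2 ->
  ex_series (pairZ (fun j => Ptilde beta h j * exp (- h * IZR (z + j)))) /\
  sumZ (fun j => Ptilde beta h j * exp (- h * IZR (z + j))) = exp (- h * IZR z) * rho beta h.
Proof.
  intros Hb Hh.
  assert (Hz : Zc beta h <> 0) by (apply Rgt_not_eq, Zc_pos; auto).
  assert (K : forall j, Ptilde beta h j * exp (- h * IZR (z + j)) = exp (- h * IZR z) / Zc beta h * ez beta 0 j).
  { intro j. rewrite w_eq by auto. unfold ez. rewrite plus_IZR.
    replace (- h * (IZR z + IZR j)) with (- h * IZR z + - h * IZR j) by ring.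
    rewrite !exp_plus. replace (0 * IZR j) with 0 by ring. rewrite exp_0.
    replace (exp (- h * IZR j)) with (/ exp (h * IZR j)).
    2:{ rewrite <- exp_Ropp. f_equal. ring. }
    pose proof (exp_pos (h * IZR j)). field. split; [auto|lra]. }
  assert (Ht0 : -beta/2 < 0 < beta/2) by lra.
  assert (S0 := sumZ_scal _ (exp (- h * IZR z) / Zc beta h) _ (E1 beta 0 Ht0)).
  assert (S1 : is_series (pairZ (fun j => Ptilde beta h j * exp (- h * IZR (z + j))))
     (exp (- h * IZR z) / Zc beta h *
        (exp (0 - beta / 2) / (1 - exp (0 - beta / 2)) + exp (- 0 - beta / 2) / (1 - exp (- 0 - beta / 2))))).
  { eapply is_series_ext; [|exact S0]. intro n. unfold pairZ. rewrite !K. reflexivity. }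
  split; [eexists; exact S1|].
  rewrite (sumZ_is _ _ S1). rewrite K.
  assert (E0 : ez beta 0 0%Z = 1) by (unfold ez; rewrite Rabs_R0; replace (-(beta/2)*0 + 0*0) with 0 by ring; apply exp_0).
  rewrite E0. unfold rho. replace (0 - beta/2) with (-beta/2) by lra. replace (-0 - beta/2) with (-beta/2) by lra.
  field. split; [|auto]. pose proof (exp_lt1 (-beta/2)). assert (exp (-beta/2) < 1) by (apply exp_lt1; lra). lra.
Qed.

Lemma rho_eq beta h : 0 < beta -> 0 < h < beta/2 ->
  rho beta h = (1 - pp beta h) * (1 - qq beta h) / ((1 - exp (-beta/2)) * (1 - exp (-beta/2))).
Proof.
  intros Hb Hh.
  destruct (pq_facts beta h Hb Hh) as [[Hq Hqp] [Hp1 Hpq]].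
  assert (Ha : exp (-beta/2) < 1) by (apply exp_lt1; lra).
  pose proof (exp_pos (-beta/2)) as Ha0.
  assert (Z1 : Zc beta h = (1 - exp (-beta/2) * exp (-beta/2)) / ((1 - pp beta h) * (1 - qq beta h))).
  { unfold Zc. rewrite <- Hpq. field. split; lra. }
  unfold rho. rewrite Z1. field. repeat split; try lra; nra.
Qed.

Lemma rho_bounds beta h : 0 < beta -> 0 < h < beta/2 -> 0 <= rho beta h < 1.
Proof.
  intros Hb Hh. rewrite rho_eq by auto.
  destruct (pq_facts beta h Hb Hh) as [[Hq Hqp] [Hp1 Hpq]].
  assert (Ha : exp (-beta/2) < 1) by (apply exp_lt1; lra).
  pose proof (exp_pos (-beta/2)) as Ha0.
  set (a := exp (-beta/2)) in *. set (p := pp beta h) in *. set (q := qq beta h) in *.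
  assert (0 < (1-a)*(1-a)) by nra.
  split.
  - apply Rmult_le_pos; [nra|]. left; apply Rinv_0_lt_compat; auto.
  - apply (Rmult_lt_reg_r ((1-a)*(1-a))); auto. unfold Rdiv. rewrite Rmult_assoc, Rinv_l by lra.
    assert (p + q > 2 * a) by nra. nra.
Qed.

Lemma rho_mono beta h1 h : 0 < beta -> 0 < h1 -> h1 <= h -> h < beta/2 -> rho beta h <= rho beta h1.
Proof.
  intros Hb H1 H2 H3. rewrite !rho_eq by lra.
  destruct (pq_facts beta h Hb ltac:(lra)) as [[Hq Hqp] [Hp1 Hpq]].
  destruct (pq_facts beta h1 Hb ltac:(lra)) as [[Hq1 Hqp1] [Hp11 Hpq1]].
  assert (Hpp : pp beta h1 <= pp beta h) by (apply exp_le_mono; lra).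
  assert (Ha : exp (-beta/2) < 1) by (apply exp_lt1; lra).
  pose proof (exp_pos (-beta/2)) as Ha0.
  set (a := exp (-beta/2)) in *.
  assert (0 < (1-a)*(1-a)) by nra.
  unfold Rdiv. apply Rmult_le_compat_r; [left; apply Rinv_0_lt_compat; auto|].
  assert (pp beta h * (pp beta h + qq beta h - pp beta h1 - qq beta h1) >= 0).
  { assert ((pp beta h - pp beta h1) * (pp beta h - qq beta h1) >= 0) by nra. nra. }
  assert (pp beta h + qq beta h - pp beta h1 - qq beta h1 >= 0).
  { destruct (Rle_or_lt 0 (pp beta h + qq beta h - pp beta h1 - qq beta h1)); [lra|nra]. }
  nra.
Qed.

Lemma Cc_bounds beta h : 0 < beta -> 0 < h < beta/2 -> 0 < Cc beta h <= 1.
Proof.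
  intros Hb Hh. destruct (pq_facts beta h Hb Hh) as [[Hq Hqp] [Hp1 Hpq]]. unfold Cc.
  split. apply Rdiv_lt_0_compat; lra.
  apply (Rmult_le_reg_r (1 - qq beta h)); [lra|]. unfold Rdiv. rewrite Rmult_assoc, Rinv_l by lra. lra.
Qed.

Lemma gz_nonneg beta h y : 0 < beta -> 0 < h < beta/2 -> (0 <= y)%Z -> 0 <= gz beta h y.
Proof.
  intros Hb Hh Hy. unfold gz. destruct (Cc_bounds beta h Hb Hh).
  assert (exp (-2 * h * IZR y) <= 1).
  { rewrite <- exp_0. apply exp_le_mono. apply IZR_le in Hy. nra. }
  pose proof (exp_pos (-2 * h * IZR y)). nra.
Qed.

Lemma inv beta h k : 0 < beta -> 0 < h < beta/2 -> forall z, (0 <= z)%Z ->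
  gz beta h z <= surv beta h k z <= gz beta h z + Cc beta h * rho beta h ^ k * exp (- h * IZR z).
Proof.
  intros Hb Hh. destruct (Cc_bounds beta h Hb Hh) as [Cp C1].
  destruct (rho_bounds beta h Hb Hh) as [r0 r1].
  induction k as [|k IH]; intros z Hz.
  - simpl. unfold gz. assert (HZ := IZR_le _ _ Hz).
    assert (exp (-2 * h * IZR z) <= exp (- h * IZR z)) by (apply exp_le_mono; nra).
    pose proof (exp_pos (-2 * h * IZR z)). nra.
  - change (surv beta h (S k) z) with
      (sumZ (fun j => Ptilde beta h j * (if (- z <? j)%Z then surv beta h k (z + j) else 0))).
    set (F := fun j => Ptilde beta h j * (if (- z <? j)%Z then surv beta h k (z + j) else 0)).
    set (K := Cc beta h * rho beta h ^ k).
    assert (K0 : 0 <= K) by (unfold K; apply Rmult_le_pos; [lra | apply pow_le; lra]).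
    destruct (E2 beta h (Z.to_nat z) Hb Hh) as [Eg Sg]. rewrite Z2Nat.id in Eg, Sg by auto.
    destruct (E3 beta h z Hb Hh) as [El Sl].
    set (G := Gf beta h z) in *.
    set (L := fun j => Ptilde beta h j * exp (- h * IZR (z + j))) in *.
    set (H := fun j => G j + K * L j).
    assert (EH : ex_series (pairZ H)).
    { destruct Eg as [lg Ig]. destruct El as [ll Il].
      exists (lg + K * ll). apply sumZ_plus; auto. apply sumZ_scal; auto. }
    assert (SH : sumZ H = sumZ G + K * sumZ L).
    { destruct Eg as [lg Ig]. destruct El as [ll Il].
      unfold H. rewrite (sumZ_is _ _ (sumZ_plus _ _ _ _ Ig (sumZ_scal _ K _ Il))).
      rewrite (sumZ_is _ _ Ig), (sumZ_is _ _ Il). ring. }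
    assert (PW : forall j, 0 <= G j <= F j /\ F j <= H j).
    { intro j. unfold H, F, L. unfold G, Gf. pose proof (Ptilde_nonneg beta h j Hb Hh) as P0.
      pose proof (exp_pos (- h * IZR (z + j))) as Ep.
      destruct (- z <? j)%Z eqn:E.
      - apply Z.ltb_lt in E. assert (Hj : (0 <= z + j)%Z) by lia.
        destruct (IH (z + j)%Z Hj) as [I1 I2].
        pose proof (gz_nonneg beta h (z + j) Hb Hh Hj).
        split; [split|].
        + apply Rmult_le_pos; auto.
        + apply Rmult_le_compat_l; auto.
        + replace (Ptilde beta h j * gz beta h (z + j) + K * (Ptilde beta h j * exp (- h * IZR (z + j))))
            with (Ptilde beta h j * (gz beta h (z + j) + K * exp (- h * IZR (z + j)))) by ring.
          apply Rmult_le_compat_l; auto.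
      - rewrite Rmult_0_r. split; [lra|]. assert (0 <= K * (Ptilde beta h j * exp (- h * IZR (z + j)))).
        { apply Rmult_le_pos; auto. apply Rmult_le_pos; lra. } lra. }
    assert (EF : ex_series (pairZ F)).
    { apply (ex_dom F H); auto. intro j. destruct (PW j) as [[A B] C].
      rewrite Rabs_pos_eq; lra. }
    split.
    + rewrite <- Sg. apply sumZ_le; auto. intro j; apply (PW j).
    + eapply Rle_trans; [apply (sumZ_le F H); auto; intro j; apply (PW j)|].
      rewrite SH, Sg, Sl. unfold K. simpl. lra.
Qed.

Lemma kappa_eq beta h x : 0 < beta -> 0 < h < beta/2 -> kappa beta h x = gz beta h (Z.of_nat x).
Proof.
  intros Hb Hh. unfold kappa.
  destruct (Cc_bounds beta h Hb Hh) as [Cp C1].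
  destruct (rho_bounds beta h Hb Hh) as [r0 r1].
  set (z := Z.of_nat x).
  assert (Hz : (0 <= z)%Z) by (unfold z; lia).
  assert (L : is_lim_seq (fun k => surv beta h k z) (gz beta h z)).
  { apply (is_lim_seq_le_le (fun _ => gz beta h z) _
            (fun k => gz beta h z + Cc beta h * rho beta h ^ k * exp (- h * IZR z))).
    - intro k. apply inv; auto.
    - apply is_lim_seq_const.
    - pose proof (lim_geom_shift (rho beta h) (Cc beta h * exp (- h * IZR z)) 0 ltac:(lra)) as G.
      pose proof (is_lim_seq_plus' _ _ _ _ (is_lim_seq_const (gz beta h z)) G) as G2.
      rewrite Rplus_0_r in G2. eapply is_lim_seq_ext; [|exact G2].
      intro n. simpl. rewrite Nat.add_0_r. ring. }
  rewrite (is_lim_seq_unique _ _ L). reflexivity.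
Qed.

Theorem mainTheorem8 (beta : R) (Hbeta : 0 < beta) :
  (forall (x : nat) (h : R), 0 < h < beta / 2 ->
     kappa beta h x =
     1 - exp (- 2 * h * INR x) * ((1 - exp (h - beta / 2)) / (1 - exp (- h - beta / 2))))
  /\
  (forall (c h1 h2 : R), 0 < c -> 0 < h1 -> h1 <= h2 -> h2 < beta / 2 ->
     forall eps : R, 0 < eps ->
     exists N : nat, forall k : nat, (N <= k)%nat ->
       forall (x : nat) (h : R), INR x <= c * ln (INR k) -> h1 <= h <= h2 ->
         Rabs (surv beta h k (Z.of_nat x) - kappa beta h x) <= eps).
Proof.
  split.
  - intros x h Hh. rewrite kappa_eq by auto. unfold gz, Cc, pp, qq. rewrite <- INR_IZR_INZ.
    rewrite Rmult_comm. reflexivity.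
  - intros c h1 h2 Hc Hh1 H12 H2 eps Heps.
    destruct (rho_bounds beta h1 Hbeta ltac:(lra)) as [r0 r1].
    assert (Ha : Rabs (rho beta h1) < 1) by (rewrite Rabs_pos_eq; lra).
    destruct (proj2 (is_lim_seq_spec _ _) (is_lim_seq_geom _ Ha) (mkposreal eps Heps)) as [N HN].
    exists N. intros k Hk x h Hx [Hh1' Hh2'].
    assert (Hh : 0 < h < beta/2) by lra.
    rewrite kappa_eq by auto.
    destruct (inv beta h k Hbeta Hh (Z.of_nat x) ltac:(lia)) as [I1 I2].
    destruct (Cc_bounds beta h Hbeta Hh) as [Cp C1].
    destruct (rho_bounds beta h Hbeta Hh) as [s0 s1].
    pose proof (HN k Hk) as HNk. simpl in HNk. rewrite Rminus_0_r in HNk.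
    assert (Hr : rho beta h ^ k <= rho beta h1 ^ k) by (apply pow_incr; split; auto; apply rho_mono; lra).
    assert (He : exp (- h * IZR (Z.of_nat x)) <= 1).
    { rewrite <- exp_0. apply exp_le_mono. pose proof (IZR_le 0 _ (Zle_0_nat x)). nra. }
    pose proof (exp_pos (- h * IZR (Z.of_nat x))).
    assert (0 <= rho beta h ^ k) by (apply pow_le; lra).
    assert (Cc beta h * rho beta h ^ k * exp (- h * IZR (Z.of_nat x)) <= rho beta h ^ k).
    { assert (Cc beta h * rho beta h ^ k <= rho beta h ^ k) by nra. nra. }
    pose proof (Rle_abs (rho beta h1 ^ k)).
    rewrite Rabs_pos_eq by lra. lra.
Qed.
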